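(* Let $n\ge 3$ and let $(u,v)$ be an MAB pair of binary words with $|u|=|v|=n$, $i=\mathrm{lsb}(u,v)$, $j=\mathrm{lsb}(v,u)$ and $i+j>n$. Write $u=\alpha\gamma\beta$ and $v=\beta'\gamma'\alpha'$ with $|\alpha|=|\alpha'|=n-i$, $|\gamma|=|\gamma'|=i+j-n$ and $|\beta|=|\beta'|=n-j$ (so that $\mathrm{sb}(u,v)=(\gamma\beta,\beta'\gamma')$ and $\mathrm{sb}(v,u)=(\gamma'\alpha',\alpha\gamma)$). Then $\big||\alpha|_c-|\alpha'|_c\big|=1$ for all $c\in\{a,b\}$ if and only if $i+j-n=1$.
   Context: Let $\Sigma=\{a,b\}$. For a word $w$ and a letter $c$, $|w|_c$ denotes the number of occurrences of $c$ in $w$. Two words $x,y$ are abelian equivalent, written $x\sim_{\mathrm{abl}}y$, if $|x|_c=|y|_c$ for all $c\in\Sigma$. For words $u,v$: a pair $(x,y)$ is an internal abelian-border of $(u,v)$ if $x$ is a nonempty proper suffix of $u$, $y$ is a proper prefix of $v$, and $x\sim_{\mathrm{abl}}y$; it is an external abelian-border of $(u,v)$ if $x$ is a nonempty proper prefix of $u$, $y$ is a proper suffix of $v$, and $x\sim_{\mathrm{abl}}y$. The pair $(u,v)$ is mutually abelian-bordered (MAB) if it has both an internal and an external abelian-border, and mutually abelian-unbordered (MAU) if it has neither. If $(u,v)$ has an internal abelian-border, $\mathrm{sb}(u,v)$ denotes its internal abelian-border $(x,y)$ of minimal length and $\mathrm{lsb}(u,v)=|x|$ is that minimal length. *)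

(* Defs.v *)
From HB Require Import structures.
From mathcomp Require Import all_boot all_order all_algebra.
Set Implicit Arguments. Unset Strict Implicit. Unset Printing Implicit Defensive.

Inductive letter := La | Lb.
Definition letter_to_bool (c : letter) : bool := if c is La then true else false.
Definition bool_to_letter (x : bool) : letter := if x then La else Lb.
Lemma letter_boolK : cancel letter_to_bool bool_to_letter. Proof. by case. Qed.
HB.instance Definition _ := Equality.copy letter (can_type letter_boolK).
HB.instance Definition _ := Finite.copy letter (can_type letter_boolK).

Definition word := seq letter.

Definition occ (w : word) (c : letter) : nat := count_mem c w.

Definition abel_eq (x y : word) : bool := [forall c : letter, occ x c == occ y c].

Definition is_int_border (u v x y : word) : bool :=
  [&& 0 < size x, size x < size u, suffix x u,
      size y < size v, prefix y v & abel_eq x y].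

Definition is_ext_border (u v x y : word) : bool :=
  [&& 0 < size x, size x < size u, prefix x u,
      size y < size v, suffix y v & abel_eq x y].

Definition has_int_border (u v : word) : Prop :=
  exists x y, is_int_border u v x y.
Definition has_ext_border (u v : word) : Prop :=
  exists x y, is_ext_border u v x y.

Definition MAB (u v : word) : Prop := has_int_border u v /\ has_ext_border u v.

Definition is_lsb (u v : word) (i : nat) : Prop :=
  (exists x y, is_int_border u v x y /\ size x = i) /\
  (forall x y, is_int_border u v x y -> i <= size x).

(* Main.v *)
Require Import Defs.
From mathcomp Require Import all_boot all_order all_algebra.
From mathcomp Require Import zify.
Set Implicit Arguments. Unset Strict Implicit.

Lemma occ_cat (x y : word) c : occ (x ++ y) c = occ x c + occ y c.
Proof. by rewrite /occ count_cat. Qed.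

Lemma occ_size (w : word) : occ w La + occ w Lb = size w.
Proof.
rewrite /occ; elim: w => [|[] w IH] //=.
  by rewrite add1n add0n addSn IH.
by rewrite add0n add1n addnS IH.
Qed.

Lemma abel_size x y : abel_eq x y -> size x = size y.
Proof.
move/forallP=> H; rewrite -!occ_size.
by rewrite (eqP (H La)) (eqP (H Lb)).
Qed.

Lemma abel_of x y : size x = size y -> occ x La = occ y La -> abel_eq x y.
Proof.
move=> Hs Ha; apply/forallP => -[]; apply/eqP => //.
have := occ_size x; have := occ_size y; lia.
Qed.

Lemma occ_take_step (w : word) m c :
  occ (take m w) c <= occ (take m.+1 w) c <= (occ (take m w) c).+1.
Proof.
case: (ltnP m (size w)) => H.
  rewrite (take_nth La H) -cats1 occ_cat /occ /=; case: (_ == c) => /=; lia.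
rewrite !take_oversize //; lia.
Qed.

Lemma occ_drop_step (w : word) m c :
  occ (drop m.+1 w) c <= occ (drop m w) c <= (occ (drop m.+1 w) c).+1.
Proof.
case: (ltnP m (size w)) => H.
  rewrite (drop_nth La H) /occ /=; case: (_ == c) => /=; lia.
rewrite !drop_oversize //; lia.
Qed.

Lemma occ_take_drop (w : word) m c : occ (take m w) c + occ (drop m w) c = occ w c.
Proof. by rewrite -occ_cat cat_take_drop. Qed.

Lemma lsb_char (u v : word) n i :
  is_lsb u v i -> size u = n -> size v = n ->
  [/\ 0 < i < n, abel_eq (drop (n - i) u) (take i v) &
     forall m, 0 < m -> m < i -> occ (drop (n - m) u) La <> occ (take m v) La].
Proof.
move=> [[x [y [Hb Hx]]] Hmin] Hu Hv.
move: (Hb) => /and5P [H1 H2 H3 H4 /andP [H5 H6]].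
have Hsy := abel_size H6.
move: H3; rewrite suffixE => /eqP Ex.
move: H5; rewrite prefixE => /eqP Ey.
split.
- apply/andP; split; lia.
- by rewrite -Hx -Hu Ex Hsy Ey.
- move=> m Hm0 Hmi Heq.
  have Hb2 : is_int_border u v (drop (n - m) u) (take m v).
    have Sd : size (drop (n - m) u) = m by rewrite size_drop; lia.
    have St : size (take m v) = m by rewrite size_takel; lia.
    apply/and5P; split; try lia.
    + apply: suffix_drop.
    + apply/andP; split; first by apply: prefix_take.
      by apply: abel_of; rewrite ?Sd ?St.
  have := Hmin _ _ Hb2; rewrite size_drop; lia.
Qed.

Lemma ivt (h : nat -> int) (k : nat) (e : int) :
  (e = 1 \/ e = -1)%R -> h 0 = e -> h k = 0%R ->
  (forall t, t < k -> (h t.+1 - h t <= 1 /\ h t - h t.+1 <= 1)%R) ->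
  (forall t, 0 < t -> t < k -> h t <> 0%R /\ h t <> e) -> k <= 1.
Proof.
move=> He H0 Hk Hs Hn.
case: (leqP k 1) => // Hk2.
have C : forall t, 0 < t -> t < k -> (2 <= e * h t)%R.
  elim=> [//|t IH] _ Ht.
  have [A B] := Hs t (ltnW Ht).
  have [N1 N2] := Hn t.+1 erefl Ht.
  case: t IH Ht A B N1 N2 => [|t] IH Ht A B N1 N2.
    rewrite H0 in A B; case: He => He; subst e; lia.
  have := IH erefl (ltnW Ht); case: He => He; subst e; lia.
have := C k.-1 ltac:(lia) ltac:(lia).
have [A B] := Hs k.-1 ltac:(lia).
rewrite prednK ?Hk in A B; last lia.
case: He => He; subst e; lia.
Qed.

Theorem mainTheorem4 (n : nat) (u v : word) (i j : nat)
    (alpha gamma beta alpha' gamma' beta' : word) :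
  3 <= n ->
  MAB u v ->
  size u = n -> size v = n ->
  is_lsb u v i -> is_lsb v u j ->
  n < i + j ->
  u = alpha ++ gamma ++ beta ->
  v = beta' ++ gamma' ++ alpha' ->
  size alpha = n - i -> size alpha' = n - i ->
  size gamma = i + j - n -> size gamma' = i + j - n ->
  size beta = n - j -> size beta' = n - j ->
  (forall c : letter, `|occ alpha c - occ alpha' c|%N = 1)
  <-> i + j - n = 1.
Proof.
move=> Hn _ Hu Hv Li Lj Hij Eu Ev Sa Sa' Sg Sg' Sb Sb'.
have [Hi A1 M1] := lsb_char Li Hu Hv.
have [Hj A2 M2] := lsb_char Lj Hv Hu.
have E1 : drop (n - i) u = gamma ++ beta by rewrite Eu drop_size_cat.
have E2 : take i v = beta' ++ gamma'.
  by rewrite Ev catA take_size_cat // size_cat; lia.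
have E3 : drop (n - j) v = gamma' ++ alpha' by rewrite Ev drop_size_cat.
have E4 : take j u = alpha ++ gamma.
  by rewrite Eu catA take_size_cat // size_cat; lia.
rewrite E1 E2 in A1; rewrite E3 E4 in A2.
split.
- move=> Hd.
  pose F m : int := ((occ (drop (n - m) v) La)%:Z - (occ (take m u) La)%:Z)%R.
  pose d : int := ((occ alpha La)%:Z - (occ alpha' La)%:Z)%R.
  have Hd1 : (d = 1 \/ d = -1)%R by have := Hd La; rewrite /d; lia.
  have Fs : forall m, m < n -> (F m.+1 - F m <= 1 /\ F m - F m.+1 <= 1)%R.
    move=> m Hm; rewrite /F.
    have := occ_take_step u m La.
    have := occ_drop_step v (n - m.+1) La.
    rewrite (_ : (n - m.+1).+1 = n - m); last lia.
    lia.
  have F0 : F (n - i) = (- d)%R.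
    rewrite /F /d (_ : n - (n - i) = i); last lia.
    rewrite Ev catA drop_size_cat; last by rewrite size_cat; lia.
    by rewrite Eu take_size_cat //; lia.
  have Fj : F j = 0%R.
    rewrite /F E3 E4; move/forallP: A2 => /(_ La) /eqP ->; lia.
  have Duv : ((occ u La)%:Z - (occ v La)%:Z = d)%R.
    move/forallP: A1 => /(_ La) /eqP; move/forallP: A2 => /(_ La) /eqP.
    rewrite Eu Ev !occ_cat /d; lia.
  suff: i + j - n <= 1 by lia.
  apply: (@ivt (fun t => F (n - i + t)) (i + j - n) (- d)%R).
  + case: Hd1 => ->; lia.
  + by rewrite addn0.
  + by rewrite (_ : n - i + (i + j - n) = j) //; lia.
  + move=> t Ht; rewrite addnS; apply: Fs; lia.
  + move=> t Ht0 Ht; split.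
    * rewrite /F => H0; apply: (M2 (n - i + t)); lia.
    * move=> HF; apply: (M1 (n - (n - i + t))); try lia.
      rewrite (_ : n - (n - (n - i + t)) = n - i + t); last lia.
      move: HF Duv; rewrite /F.
      have := occ_take_drop u (n - i + t) La.
      have := occ_take_drop v (n - (n - i + t)) La.
      lia.
- move=> Hk.
  rewrite Hk in Sg Sg'.
  clear E1 E2 E3 E4.
  case: gamma Sg Eu A1 A2 => [|g []] // _ Eu A1 A2.
  case: gamma' Sg' Ev A1 A2 => [|g' []] // _ Ev A1 A2.
  have Ng : g <> g'.
    move=> Eg; subst g'.
    have Hb : is_int_border u v beta beta'.
      apply/and5P; split; try lia.
      + by rewrite Eu catA; apply: suffix_suffix.
      + apply/andP; split; first by rewrite Ev; apply: prefix_prefix.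
        apply/forallP => c; move/forallP: A1 => /(_ c) /eqP.
        rewrite !occ_cat; move=> H; apply/eqP; lia.
    have := proj2 Li _ _ Hb; lia.
  move=> c; move/forallP: A2 => /(_ c) /eqP; rewrite !occ_cat /occ /=.
  move=> H; clear -H Ng.
  by case: g g' c Ng H => [] [] [] //= _; lia.
Qed.
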